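(* There exist finite alphabets $\Sigma,\Gamma$, a tier $\tau$ on $\Sigma\times\Gamma^*$ and an SFST $T$ with input alphabet $\Sigma$ and output alphabet $\Gamma$ that is $2$-TSSL on tier $\tau$, such that the function $f$ computed by $T$ is not $k$-TSSL on tier $\upsilon$ for any $k>0$ and any tier $\upsilon$ on $\Sigma\times\Gamma^*$.
   Context: Strings: $\lambda$ is the empty string; $\rtimes$ is a boundary symbol not in any alphabet. For $m\ge0$, $\mathrm{suff}^m(x)$ is the string of the last $m$ symbols of $\rtimes^mx$. $\mathrm{lcp}(A)$ is the longest common prefix of a set of strings $A$. An SFST is $T=\langle Q,\Sigma,\Gamma,q_0,\to,\sigma\rangle$ with finite state set $Q$, start state $q_0$, transition function $\to:Q\times\Sigma\to Q\times\Gamma^*$ and final output function $\sigma:Q\to\Gamma^*$. Write $q\xrightarrow{a:y}r$ if $\to(q,a)=\langle r,y\rangle$, extended to strings by $q\xrightarrow{\lambda:\lambda}q$ and composition (concatenating outputs). $T$ computes $f$ if $f(x)=y\sigma(q)$ whenever $q_0\xrightarrow{x:y}q$. (No onwardness is required of $T$.) A tier on a (possibly infinite) alphabet $A$ is a homomorphism $\tau:A^*\to A^*$ with $\tau(a)\in\{a,\lambda\}$ for each $a\in A$; it is extended to $\rtimes$ by $\tau(\rtimes)=\rtimes$. Actions of an SFST $T$: $\mathbb{A}_T:=\{\langle x,y\rangle\mid\exists q\,\exists r.\ \to(q,x)=\langle r,y\rangle\}$, written $x:y$. $T$ is $k$-TSSL on a tier $\tau$ on $\Sigma\times\Gamma^*$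 if $Q=(\{\rtimes\}\cup\mathbb{A}_T)^{k-1}$, $q_0=\rtimes^{k-1}$, and for every $q\in Q$, if $\to(q,x)=\langle r,y\rangle$ then $r=\mathrm{suff}^{k-1}(\tau(q(x:y)))$. For $f:\Sigma^*\to\Gamma^*$: $f^{\gets}(x):=\mathrm{lcp}(\{f(xy)\mid y\in\Sigma^*\})$; $f^{\to}_x$ is defined by $f(xy)=f^{\gets}(x)f^{\to}_x(y)$. Actions of $f$: $\mathbb{A}_f:=\{\langle x,y\rangle\in\Sigma\times\Gamma^*\mid\exists z.\ f^{\gets}(zx)=f^{\gets}(z)y\}$. Run $f^{\Leftarrow}(x)$: if $|x|\le1$, $f^{\Leftarrow}(x):=x:f^{\gets}(x)$; if $x=yz$ with $|y|\ge1$, $|z|=1$, $f^{\Leftarrow}(x):=f^{\Leftarrow}(y)(z:w)$ where $f^{\gets}(x)=f^{\gets}(y)w$. The function $f$ is $k$-TSSL on a tier $\upsilon$ on $\Sigma\times\Gamma^*$ if for all $x,y\in\Sigma^*$, $\mathrm{suff}^{k-1}(\upsilon(f^{\Leftarrow}(x)))=\mathrm{suff}^{k-1}(\upsilon(f^{\Leftarrow}(y)))$ implies $f^{\to}_x=f^{\to}_y$. *)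

(* Defs.v *)
From mathcomp Require Import all_boot.
From Stdlib Require Import ClassicalEpsilon.
Set Implicit Arguments. Unset Strict Implicit. Unset Printing Implicit Defensive.

(* The boundary symbol ⋊ is encoded as [None]; ordinary symbols as [Some a]. *)
Definition suffm (A : Type) (m : nat) (x : seq (option A)) : seq (option A) :=
  drop (size x) (nseq m None ++ x).

Definition is_tier (A : Type) (tau : seq A -> seq A) : Prop :=
  (forall u v, tau (u ++ v) = tau u ++ tau v) /\
  (forall a, tau [:: a] = [:: a] \/ tau [:: a] = [::]).

Definition tier_ext (A : Type) (tau : seq A -> seq A) (s : seq (option A))
  : seq (option A) :=
  flatten (map (fun o => match o with
                         | None => [:: None]
                         | Some a => map Some (tau [:: a])
                         end) s).

Record sfst (Sigma Gamma : Type) := Sfst {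
  st : finType;
  q0 : st;
  delta : st -> Sigma -> st * seq Gamma;
  sigma_out : st -> seq Gamma
}.

Fixpoint sfst_run (Sigma Gamma : Type) (T : sfst Sigma Gamma) (q : st T)
  (x : seq Sigma) : st T * seq Gamma :=
  match x with
  | [::] => (q, [::])
  | a :: x' => let: (r, y) := delta q a in
               let: (r', y') := sfst_run r x' in (r', y ++ y')
  end.

Definition sfst_fun (Sigma Gamma : Type) (T : sfst Sigma Gamma)
  (x : seq Sigma) : seq Gamma :=
  let: (q, y) := sfst_run (q0 T) x in y ++ sigma_out q.

Definition sfst_action (Sigma Gamma : Type) (T : sfst Sigma Gamma)
  (a : Sigma * seq Gamma) : Prop :=
  exists q : st T, (delta q a.1).2 = a.2.

(* T is k-TSSL on tier tau: Q = ({⋊} ∪ A_T)^(k-1) (via the injective labelling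
   [lab], whose image is exactly that set), q0 = ⋊^(k-1), and
   ->(q,x) = <r,y> implies r = suff^(k-1)(tau(q (x:y))). *)
Definition sfst_kTSSL (Sigma Gamma : finType) (k : nat)
  (tau : seq (Sigma * seq Gamma) -> seq (Sigma * seq Gamma))
  (T : sfst Sigma Gamma) : Prop :=
  exists lab : st T -> seq (option (Sigma * seq Gamma)),
    injective lab /\
    (forall s, (exists q, lab q = s) <->
               (size s = k.-1 /\ forall a, Some a \in s -> sfst_action T a)) /\
    lab (q0 T) = nseq k.-1 None /\
    (forall q a,
        lab (delta q a).1 =
        suffm k.-1 (tier_ext tau (rcons (lab q) (Some (a, (delta q a).2))))).

Definition is_lcp (Gamma : Type) (P : seq Gamma -> Prop) (p : seq Gamma) : Prop :=
  (forall s, P s -> exists t, s = p ++ t) /\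
  (forall p', (forall s, P s -> exists t, s = p' ++ t) -> exists t, p = p' ++ t).

Definition fgets (Sigma Gamma : Type) (f : seq Sigma -> seq Gamma)
  (x : seq Sigma) : seq Gamma :=
  epsilon (inhabits [::]) (is_lcp (fun s => exists y, s = f (x ++ y))).

(* f^->_x, defined by f(xy) = f^<-(x) f^->_x(y) *)
Definition fto (Sigma Gamma : Type) (f : seq Sigma -> seq Gamma)
  (x : seq Sigma) : seq Sigma -> seq Gamma :=
  fun y => drop (size (fgets f x)) (f (x ++ y)).

(* The run f^<=(x).  Its symbols are pairs (input of length <= 1, output):
   [None] input encodes the pseudo-action λ : f^<-(λ) of the empty run. *)
Definition frun (Sigma Gamma : Type) (f : seq Sigma -> seq Gamma)
  (x : seq Sigma) : seq (option Sigma * seq Gamma) :=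
  match x with
  | [::] => [:: (None, fgets f [::])]
  | _ =>
    map (fun p : Sigma * nat =>
           (Some p.1,
            if p.2 == 1 then fgets f (take 1 x)
            else drop (size (fgets f (take p.2.-1 x))) (fgets f (take p.2 x))))
        (zip x (iota 1 (size x)))
  end.

(* Application of a tier ups on Sigma x Gamma^* to a run; the pseudo-action
   λ:w (only occurring in f^<=(λ)) is kept iff [b]. *)
Definition tier_run (Sigma Gamma : Type)
  (ups : seq (Sigma * seq Gamma) -> seq (Sigma * seq Gamma)) (b : bool)
  (r : seq (option Sigma * seq Gamma)) : seq (option (option Sigma * seq Gamma)) :=
  flatten (map (fun p : option Sigma * seq Gamma =>
                  match p.1 with
                  | Some a => map (fun q : Sigma * seq Gamma => Some (Some q.1, q.2))
                                  (ups [:: (a, p.2)])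
                  | None => if b then [:: Some p] else [::]
                  end) r).

Definition fun_kTSSL (Sigma Gamma : Type) (k : nat)
  (ups : seq (Sigma * seq Gamma) -> seq (Sigma * seq Gamma)) (b : bool)
  (f : seq Sigma -> seq Gamma) : Prop :=
  forall x y : seq Sigma,
    suffm k.-1 (tier_run ups b (frun f x)) = suffm k.-1 (tier_run ups b (frun f y)) ->
    fto f x = fto f y.

(* Main.v *)
Require Import Defs.
From mathcomp Require Import all_boot.
From Stdlib Require Import ClassicalEpsilon.

Definition actT (p : bool * bool) : bool * seq bool :=
  match p with
  | (false, false) => (false, [:: false; false])
  | (false, true) => (false, [::])
  | (true, true) => (true, [:: true; true])
  | (true, false) => (true, [:: false; true])
  end.

Definition nxt (q : option (bool * bool)) (x : bool) : bool * bool :=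
  match q, x with
  | None, false => (false, false)
  | None, true => (true, false)
  | Some (false, false), false => (false, true)
  | Some (false, true), false => (false, false)
  | Some (false, false), true => (true, true)
  | Some (false, true), true => (true, false)
  | Some (true, _), false => (false, false)
  | Some (true, _), true => (true, false)
  end.

Definition deltaT (q : option (bool * bool)) (x : bool) :
  option (bool * bool) * seq bool :=
  (Some (nxt q x), (actT (nxt q x)).2).

Definition sigmaT (q : option (bool * bool)) : seq bool :=
  match q with Some (false, true) => [:: false] | _ => [::] end.

Definition TT : sfst bool bool :=
  @Sfst bool bool (option (bool * bool)) None deltaT sigmaT.

Definition labT (q : option (bool * bool)) : seq (option (bool * seq bool)) :=
  match q with None => [:: None] | Some p => [:: Some (actT p)] end.

Lemma act_nxt q x : (actT (nxt q x)).1 = x.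
Proof. by case: q => [[[] []]|]; case: x. Qed.

Lemma tier_ext_id (A : Type) (s : seq (option A)) : tier_ext (fun s => s) s = s.
Proof. by elim: s => [|[a|] s IH] //=; rewrite /tier_ext /= in IH *; rewrite IH. Qed.

Lemma suffm1 (A : Type) (l : seq (option A)) e : suffm 1 (rcons l e) = [:: e].
Proof.
rewrite /suffm size_rcons /= -cats1.
by rewrite drop_size_cat.
Qed.

Lemma ktssl : sfst_kTSSL 2 (fun s => s) TT.
Proof.
exists labT; split; [|split; [|split]].
- by case=> [[[] []]|]; case=> [[[] []]|].
- move=> s; split.
  + case=> q <-; split; first by case: q => [[[] []]|].
    move=> a; case: q => [[[] []]|] //=; rewrite inE => /eqP [->].
    * by exists (Some (false,false)).
    * by exists None.
    * by exists (Some (false,false)).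
    * by exists None.
  + case=> Hs Ha; case: s Hs Ha => [|o [|]] // _ Ha.
    case: o Ha => [[x w]|] Ha; last by exists None.
    have [q Hq] := Ha (x, w) (mem_head _ _).
    exists (Some (nxt q x)) => /=.
    rewrite /= in Hq; rewrite -Hq /=; by rewrite {1}[actT _]surjective_pairing act_nxt.
- by [].
- move=> q a /=; rewrite tier_ext_id suffm1 /deltaT /=.
  by rewrite [actT _]surjective_pairing act_nxt.
Qed.

Section Run.
Variables (S G : Type) (T : sfst S G).

Lemma run_cons (q : st T) a x : sfst_run q (a :: x) =
  ((sfst_run (delta q a).1 x).1, (delta q a).2 ++ (sfst_run (delta q a).1 x).2).
Proof. by rewrite /=; case: (delta q a) => r y; case: (sfst_run r x). Qed.

Lemma run_cat (q : st T) x y : sfst_run q (x ++ y) =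
  ((sfst_run (sfst_run q x).1 y).1,
   (sfst_run q x).2 ++ (sfst_run (sfst_run q x).1 y).2).
Proof.
elim: x q => [|a x IH] q /=; first by case: (sfst_run q y).
rewrite -!/(sfst_run _ _).
case: (delta q a) => r w; rewrite IH.
by case: (sfst_run r x) => r1 w1 /=; rewrite catA.
Qed.

Lemma fun_eq x : sfst_fun T x = (sfst_run (q0 T) x).2 ++ sigma_out (sfst_run (q0 T) x).1.
Proof. by rewrite /sfst_fun; case: (sfst_run _ x). Qed.
End Run.

Lemma run_an n : sfst_run (q0 TT) (nseq n.+1 false) =
  (Some (if odd n then (false,true) else (false,false)), nseq (n.+1 + ~~ odd n) false).
Proof.
elim: n => [//|n IH].
rewrite -[n.+2]addn1 nseqD run_cat IH /=.
case: (odd n) => /=; [by rewrite -[[:: false; false]]/(nseq 2 false) -nseqD addn0 -addnA | by rewrite cats0 addn0].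
Qed.

Lemma tail_ft z : exists t,
  (sfst_run (Some (false,true) : st TT) z).2 ++ sigmaT (sfst_run (Some (false,true) : st TT) z).1
  = false :: t.
Proof.
case: z => [|a z]; first by exists [::].
rewrite run_cons; case: a => /=; eexists; reflexivity.
Qed.

Lemma f_ext n z : exists t, sfst_fun TT (nseq n.+1 false ++ z) = nseq n.+2 false ++ t.
Proof.
rewrite fun_eq run_cat run_an /=.
case: (odd n) => /=.
- have [t Ht] := tail_ft z; exists t.
  rewrite addn0 -catA Ht -[false :: t]/([:: false] ++ t) catA.
  by rewrite -[[:: false]]/(nseq 1 false) -nseqD addn1.
- eexists; by rewrite addn1 -catA.
Qed.

Lemma f_an n : sfst_fun TT (nseq n.+1 false) = nseq n.+2 false.
Proof.
rewrite fun_eq run_an /=; case: (odd n) => /=.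
- by rewrite addn0 -[[:: false]]/(nseq 1 false) -nseqD addn1.
- by rewrite addn1 cats0.
Qed.

Lemma lcp_unique (G : Type) (P : seq G -> Prop) p p' :
  is_lcp P p -> is_lcp P p' -> p = p'.
Proof.
move=> [H1 H2] [H1' H2'].
have [t Ht] := H2 _ H1'. have [t' Ht'] := H2' _ H1.
move: Ht; rewrite Ht' -catA => /(congr1 size); rewrite !size_cat => /eqP.
rewrite -{1}[size p]addn0 eqn_add2l eq_sym addn_eq0 => /andP [/nilP -> _].
by rewrite cats0.
Qed.

Lemma fgets_eq (S G : Type) (f : seq S -> seq G) x p :
  is_lcp (fun s => exists y, s = f (x ++ y)) p -> fgets f x = p.
Proof.
move=> H; symmetry; rewrite /fgets.
have He := epsilon_spec (inhabits [::])
  (is_lcp (fun s => exists y, s = f (x ++ y))) (ex_intro _ p H).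
exact: lcp_unique H He.
Qed.

Lemma fgets_an n : fgets (sfst_fun TT) (nseq n.+1 false) = nseq n.+2 false.
Proof.
apply: fgets_eq; split.
- by move=> s [y ->]; apply: f_ext.
- move=> p' H; have [t Ht] := H _ (ex_intro _ [::] erefl).
  by exists t; rewrite -Ht cats0 f_an.
Qed.

Lemma zip_nseq (A B : Type) (a : A) (s : seq B) :
  zip (nseq (size s) a) s = map (pair a) s.
Proof. by elim: s => //= b s ->. Qed.

Lemma map_cst (A B : Type) (c : B) (s : seq A) : map (fun _ => c) s = nseq (size s) c.
Proof. by elim: s => //= a s ->. Qed.

Lemma zip_nseq_iota (A : Type) (a : A) j n :
  zip (nseq n a) (iota j n) = map (pair a) (iota j n).
Proof. by rewrite -{1}(size_iota j n) zip_nseq. Qed.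

Lemma frun_an m : frun (sfst_fun TT) (nseq m.+1 false) =
  (Some false, [:: false; false]) :: nseq m (Some false, [:: false]).
Proof.
rewrite /frun size_nseq zip_nseq_iota -map_comp /=.
have E1 : fgets (sfst_fun TT) [:: false] = [:: false; false] := fgets_an 0.
rewrite take0 E1 -/(nseq m.+1 false); congr (_ :: _).
transitivity (map (fun _ : nat => (@Some bool false, [:: false])) (iota 2 m));
  last by rewrite map_cst size_iota.
apply/eq_in_map => i.
rewrite mem_iota => /andP [Hi1 Hi2] /=.
have -> : (i == 1) = false by case: i Hi1 {Hi2} => [|[|]].
case: i Hi1 Hi2 => [|[|i]] // _ Hi2 /=.
have Him : i < m by rewrite -(ltn_add2l 2).
rewrite !take_nseq //; last by apply: ltnW.
rewrite (fgets_an i) (fgets_an i.+1) size_nseq.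
by rewrite -[i.+3]addn1 nseqD drop_size_cat ?size_nseq.
Qed.

Lemma drop_nseq_cat (A : Type) (a : A) n j s : drop (n + j) (nseq n a ++ s) = drop j s.
Proof. by elim: n. Qed.

Lemma fto_an n : fto (sfst_fun TT) (nseq n.+1 false) [:: true] =
  if odd n then [:: true] else [:: true; true].
Proof.
rewrite /fto fgets_an size_nseq fun_eq run_cat run_an.
case: (odd n) => /=.
- by rewrite addn0 cats0 -addn1 drop_nseq_cat.
- by rewrite cats0 -[n.+1]addn0 -addn1 drop_nseq_cat.
Qed.

Lemma flatten_nseq1 (A : Type) (c : A) m : flatten (nseq m [:: c]) = nseq m c.
Proof. by elim: m => //= m ->. Qed.

Lemma flatten_nseq0 (A : Type) m : flatten (nseq m ([::] : seq A)) = [::].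
Proof. by elim: m. Qed.

Lemma suffm_tail (A : Type) j (p : seq (option A)) c m :
  j <= m -> suffm j (p ++ nseq m c) = nseq j c.
Proof.
move=> Hjm; rewrite /suffm -(subnK Hjm) nseqD catA size_cat !size_cat size_nseq.
rewrite catA size_nseq.
have -> : size p + (m - j) + j = size (nseq j None ++ p ++ nseq (m - j) c).
  by rewrite !size_cat !size_nseq addnC addnA.
by rewrite drop_size_cat.
Qed.

Lemma tier_run_an (ups : seq (bool * seq bool) -> seq (bool * seq bool)) b :
  is_tier ups -> exists p (o : option (option (option bool * seq bool))), forall m,
   tier_run ups b (frun (sfst_fun TT) (nseq m.+1 false)) =
     p ++ flatten (nseq m (if o is Some c then [:: c] else [::])).
Proof.
case=> _ Ht.
case: (Ht (false, [:: false])) => E.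
- by eexists; exists (Some (Some (Some false, [:: false]))) => m;
    rewrite frun_an /tier_run /= map_nseq /= E.
- by eexists; exists None => m; rewrite frun_an /tier_run /= map_nseq /= E.
Qed.

Theorem proposition19 :
  exists (Sigma Gamma : finType)
         (tau : seq (Sigma * seq Gamma) -> seq (Sigma * seq Gamma))
         (T : sfst Sigma Gamma),
    is_tier tau /\ sfst_kTSSL 2 tau T /\
    (forall (k : nat), 0 < k ->
     forall ups : seq (Sigma * seq Gamma) -> seq (Sigma * seq Gamma),
       is_tier ups -> forall b : bool, ~ fun_kTSSL k ups b (sfst_fun T)).
Proof.
exists bool, bool, (fun s => s), TT; split; [|split].
- by split => // a; left.
- exact: ktssl.
- move=> k _ ups Hups b H.
  have [p [o Ho]] := @tier_run_an ups b Hups.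
  have := H (nseq k.+1 false) (nseq k.+2 false).
  rewrite !Ho.
  have Hs : forall m, k.-1 <= m -> suffm k.-1 (p ++ flatten (nseq m
      (if o is Some c then [:: c] else [::]))) =
      suffm k.-1 (p ++ flatten (nseq k (if o is Some c then [:: c] else [::]))).
    move=> m Hm; case: o {Ho} => [c|]; last by rewrite !flatten_nseq0.
    rewrite !flatten_nseq1 !suffm_tail //; exact: leq_pred.
  rewrite (Hs k.+1) ?(Hs k) //; last by apply: leq_trans (leq_pred k) _.
  move=> /(_ erefl) /(congr1 (fun g => g [:: true])).
  rewrite !fto_an /=; by case: (odd k).
  exact: leq_pred.
Qed.
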